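(* Let $S$ be a free numerical semigroup that is reflective (allowing $S=\mathbb{N}_0$). Then $S=\langle A\rangle$ for a minimal telescopic set $A$ equal to one of: (1) $A=\{1\}$ (genus $0$); (2) $A=\{2,4n+3\}$ for some $n\in\mathbb{N}_0$ (genus $2n+1$); (3) $A=\{3,3n+2\}$ for some $n\in\mathbb{N}_0$ (genus $3n+1$); (4) $A=\{4,4n+2,4n+3\}$ for some $n\in\mathbb{N}_0$ (genus $4n+1$).
   Context: A numerical semigroup is a submonoid $S$ of $(\mathbb{N}_0,+)$ with finite complement; its genus is the number of elements of $\mathbb{N}_0\setminus S$. For a sequence $A=(a_1,\dots,a_k)$ of non-negative integers, let $d_i=\gcd(a_1,\dots,a_i)$, $S_i=\langle a_1,\dots,a_i\rangle$ (the set of $\mathbb{N}_0$-linear combinations), and $c_j=d_{j-1}/d_j$ for $j\ge2$; $A$ is telescopic if $c_ja_j\in S_{j-1}$ for all $j\in\{2,\dots,k\}$. A set is telescopic if it can be ordered into a telescopic sequence. $S$ is free if $S=\langle A\rangle$ for some telescopic set $A$. A numerical semigroup $S$ of genus $g\ge1$ is called reflective if for every $z\in\{0,1,\dots,g-1\}$ exactly one of $z$ and $z+g$ belongs to $S$; $\mathbb{N}_0$ is also considered reflective. *)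

(* Defs.v *)
From mathcomp Require Import all_boot.
Set Implicit Arguments. Unset Strict Implicit. Unset Printing Implicit Defensive.

Definition gen (s : seq nat) (x : nat) : Prop :=
  exists c : seq nat, size c = size s /\ x = sumn [seq p.1 * p.2 | p <- zip c s].

Definition numerical_semigroup (S : pred nat) : Prop :=
  S 0 /\ (forall x y, S x -> S y -> S (x + y)) /\ (exists N, forall x, N <= x -> S x).

Definition has_genus (S : pred nat) (g : nat) : Prop :=
  exists N, (forall x, N <= x -> S x) /\ count (fun x => ~~ S x) (iota 0 N) = g.

Definition pgcd (s : seq nat) : nat := foldr gcdn 0 s.

(* telescopic sequence (a_1,...,a_k): for j = 2..k (0-based index j = 1..k-1),
   c_j a_j \in S_{j-1} with c_j = d_{j-1}/d_j *)
Definition telescopic (s : seq nat) : Prop :=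
  forall j, 0 < j < size s ->
    gen (take j s) ((pgcd (take j s) %/ pgcd (take j.+1 s)) * nth 0 s j).

Definition telescopic_set (A : seq nat) : Prop :=
  uniq A /\ exists s, perm_eq s A /\ telescopic s.

Definition generated_by (S : pred nat) (A : seq nat) : Prop :=
  forall x, S x <-> gen A x.

Definition free_sg (S : pred nat) : Prop :=
  exists A, telescopic_set A /\ generated_by S A.

Definition minimal_gens (A : seq nat) : Prop :=
  uniq A /\ forall x, x \in A -> ~ gen (rem x A) x.

Definition reflective (S : pred nat) : Prop :=
  exists g, has_genus S g /\
    (g = 0 \/ (1 <= g /\ forall z, z < g -> (S z (+) S (z + g)) = true)).

(* Main.v *)
Require Import Defs.
From mathcomp Require Import all_boot zify.
Set Implicit Arguments. Unset Strict Implicit.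

Fixpoint genF (l : seq nat) (y : nat) : Prop :=
  match l with [::] => y = 0 | x :: l => exists k y', y = k * x + y' /\ genF l y' end.

Lemma gen_genF l y : gen l y <-> genF l y.
Proof.
elim: l y => [|x l IH] y /=.
  split; first by case=> c [_ ->]; case: c => [|? ?].
  by move=> ->; exists [::].
split.
  case=> [[|k c]] [//= [Hs] ->]; exists k, (sumn [seq p.1 * p.2 | p <- zip c l]).
  by split=> //; apply/IH; exists c.
case=> k [y' [-> /IH [c [Hs ->]]]]; exists (k :: c); by rewrite /= Hs.
Qed.

Lemma genF_least (Q : nat -> Prop) l :
  Q 0 -> (forall a b, Q a -> Q b -> Q (a + b)) -> (forall x, x \in l -> Q x) ->
  forall y, genF l y -> Q y.
Proof.
move=> Q0 QD; elim: l => [|x l IH] Ql y /=; first by move->.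
case=> k [y' [-> Hy']]; apply: (QD); last first.
  by apply: IH Hy' => z Hz; apply: Ql; rewrite inE Hz orbT.
have Qx : Q x by apply: Ql; rewrite inE eqxx.
elim: k => [|k IHk]; first by rewrite mul0n.
by rewrite mulSn; apply: (QD).
Qed.

Lemma genF0 l : genF l 0.
Proof. by elim: l => //= x l IH; exists 0, 0. Qed.

Lemma genFD l a b : genF l a -> genF l b -> genF l (a + b).
Proof.
elim: l a b => [|x l IH] a b /=; first by move=> -> ->.
case=> k [y [-> Hy]] [k' [y' [-> Hy']]]; exists (k + k'), (y + y'); split; last exact: IH.
by rewrite mulnDl; lia.
Qed.

Lemma genF_mem l x : x \in l -> genF l x.
Proof.
elim: l => [|z l IH] //=; rewrite inE => /orP [/eqP ->|H].
  by exists 1, 0; split; [rewrite mul1n addn0 | apply: genF0].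
by exists 0, x; split => //; apply: IH.
Qed.

Lemma genFM l k a : genF l a -> genF l (k * a).
Proof.
move=> H; elim: k => [|k IH]; first by rewrite mul0n; apply: genF0.
by rewrite mulSn; apply: genFD.
Qed.

Lemma genF_sub l1 l2 : (forall x, x \in l1 -> genF l2 x) -> forall y, genF l1 y -> genF l2 y.
Proof. move=> H; apply: genF_least => //; [exact: genF0 | exact: genFD]. Qed.

Lemma genF_perm l1 l2 : perm_eq l1 l2 -> forall y, genF l1 y <-> genF l2 y.
Proof.
move=> P y; split; apply: genF_sub => x Hx; apply: genF_mem;
  by rewrite ?(perm_mem P) // -(perm_mem P).
Qed.

Lemma genF_rcons l a y : genF (rcons l a) y <-> exists k y', y = y' + k * a /\ genF l y'.
Proof.
have P : perm_eq (rcons l a) (a :: l) by rewrite perm_rcons.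
rewrite (genF_perm P y) /=.
split; case=> k [y' [-> H]]; exists k, y'; split => //; lia.
Qed.

Lemma genF_dvd d l : (forall x, x \in l -> d %| x) -> forall y, genF l y -> d %| y.
Proof. move=> H; apply: genF_least => //; exact: dvdn_add. Qed.

Lemma pgcd_dvd l x : x \in l -> pgcd l %| x.
Proof.
elim: l => //= z l IH; rewrite inE => /orP [/eqP ->|H]; first exact: dvdn_gcdl.
exact: dvdn_trans (dvdn_gcdr _ _) (IH H).
Qed.

Lemma dvd_pgcd d l : (forall x, x \in l -> d %| x) -> d %| pgcd l.
Proof.
elim: l => //= z l IH H; rewrite dvdn_gcd H ?inE ?eqxx //=.
by apply: IH => x Hx; apply: H; rewrite inE Hx orbT.
Qed.

Lemma pgcd_rcons l a : pgcd (rcons l a) = gcdn (pgcd l) a.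
Proof. elim: l => [|z l IH] /=; first by rewrite gcdn0 gcd0n. by rewrite IH gcdnA. Qed.


Lemma count_nS_iota (S : pred nat) a n : (forall x, a <= x -> S x) ->
  count (fun x => ~~ S x) (iota a n) = 0.
Proof.
move=> H; apply/eqP; rewrite -leqn0 -(count_pred0 (iota a n)) leq_eqVlt; apply/orP; left.
apply/eqP; apply: eq_in_count => x; rewrite mem_iota => /andP [Hx _] /=.
by rewrite H.
Qed.

Lemma big_in_S (S : pred nat) g : has_genus S g ->
  (forall z, z < g -> (S z (+) S (z + g)) = true) -> forall x, 2 * g <= x -> S x.
Proof.
case=> N [HN Hc] Hx.
have E1 : count (fun x => ~~ S x) (iota 0 (N + 2 * g)) = g.
  by rewrite iotaD count_cat Hc add0n count_nS_iota ?addn0.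
have E2 : count (fun x => ~~ S x) (iota 0 (2 * g)) = g.
  have -> : 2 * g = g + g by lia.
  rewrite iotaD count_cat add0n -{2}(addn0 g) iotaDl count_map.
  rewrite (@eq_in_count _ (preim (addn g) (fun x => ~~ S x)) S); last first.
    move=> z; rewrite mem_iota add0n => /andP [_ Hz] /=.
    by move: (Hx z Hz); rewrite addnC; case: (S z); case: (S (g + z)).
  by rewrite addnC count_predC size_iota.
have E3 : count (fun x => ~~ S x) (iota (2 * g) N) = 0.
  move: E1; rewrite addnC iotaD count_cat E2 add0n; lia.
move=> x Hx2; case: (leqP N x) => HxN; first exact: HN.
apply/negPn/negP => Hn.
have : 0 < count (fun x => ~~ S x) (iota (2 * g) N).
  by rewrite -has_count; apply/hasP; exists x => //; rewrite mem_iota Hx2; lia.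
by rewrite E3.
Qed.

Definition RR m g x := if x < g then m %| x else if x < 2 * g then ~~ (m %| x - g) else true.

Lemma refl_struct (S : pred nat) g : numerical_semigroup S -> has_genus S g -> 1 <= g ->
  (forall z, z < g -> (S z (+) S (z + g)) = true) ->
  exists m, [/\ 2 <= m, m <= g.+1, S m, ~~ (m %| g) &
    [/\ (forall y, 0 < y < m -> ~~ S y) & forall x, S x = RR m g x]].
Proof.
case=> S0 [SD _] Hg g1 Hx.
have Hb := big_in_S Hg Hx.
have exP : exists n, (0 < n) && S n by exists (2 * g); rewrite Hb //; lia.
case: (ex_minnP exP) => m /andP [m0 Sm] mmin.
have Hmin : forall y, 0 < y < m -> ~~ S y.
  move=> y /andP [y0 ym]; apply/negP => Sy.
  by have := mmin y; rewrite y0 Sy /= => /(_ isT); rewrite leqNgt ym.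
have Per : forall z, z < g -> S z = (m %| z).
  elim/ltn_ind => z IH zg.
  case: (ltnP z m) => zm.
    case: (posnP z) => [-> | z0]; first by rewrite S0 dvdn0.
    rewrite (negbTE (Hmin z _)) ?z0 ?zm //.
    by apply/esym/negbTE; apply/negP => /(dvdn_leq z0); rewrite leqNgt zm.
  have Ez : z = (z - m) + m by lia.
  have IHz := IH (z - m) ltac:(lia) ltac:(lia).
  rewrite {2}Ez (dvdn_addl _ (dvdnn m)) -IHz.
  case Szm : (S (z - m)); first by rewrite Ez; apply: SD.
  have := Hx (z - m) ltac:(lia); rewrite Szm /= => Szg.
  have Szg2 : S (z + g).
    have -> : z + g = (z - m + g) + m by lia.
    by apply: SD.
  by have := Hx z zg; rewrite Szg2; case: (S z).
have HR : forall x, S x = RR m g x.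
  move=> x; rewrite /RR; case: ltnP => xg; first exact: Per.
  case: ltnP => x2g; last exact: Hb.
  have := Hx (x - g) ltac:(lia); rewrite subnK // Per; last by lia.
  by case: (S x); case: (m %| x - g).
have m2 : 2 <= m.
  case: (ltnP 1 m) => // m1; have m1' : m = 1 by lia.
  have Sg : S g.
    have -> : g = (g - 1) + 1 by lia.
    by apply: SD; [rewrite Per ?m1' ?dvd1n //; lia | rewrite -m1'].
  by have := Hx 0 g1; rewrite S0 add0n Sg.
have mg : m <= g.+1.
  have Sg1 : S g.+1.
    case: (ltnP 1 g) => g2; last by apply: Hb; lia.
    have := Hx 1 g2; rewrite (negbTE (Hmin 1 _)) ?m2 //= add1n.
  by have := mmin g.+1; rewrite Sg1 => /(_ isT).
exists m; split => //.
apply/negP => mdg.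
have Sgm : S (g - m).
  case: (ltnP m g) => mlt; last by have -> : g - m = 0 by lia.
  by rewrite Per ?dvdn_subr // ?(ltnW mlt) //; lia.
have : S (g - m + m) by apply: SD.
rewrite subnK; last by apply: dvdn_leq => //; lia.
by have := Hx 0 g1; rewrite S0 add0n => /= /negbTE ->.
Qed.


Lemma dvd_close m x y : m %| x -> m %| y -> x < y + m -> y < x + m -> x = y.
Proof.
move=> /dvdnP [k1 ->] /dvdnP [k2 ->] H1 H2.
case: (ltngtP k1 k2) => [lt|lt|->] //.
  have : k1.+1 * m <= k2 * m by apply: leq_mul.
  lia.
have : k2.+1 * m <= k1 * m by apply: leq_mul.
lia.
Qed.

Lemma dvd_succ D x : D %| x -> D %| x + 1 -> D = 1.
Proof. by move=> H; rewrite (dvdn_addr _ H) dvdn1 => /eqP. Qed.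

Lemma dvd_plus2 D x : D %| x -> D %| x + 2 -> D %| 2.
Proof. by move=> H; rewrite (dvdn_addr _ H). Qed.

Lemma cop_dvd a D : coprime a D -> D %| a -> D = 1.
Proof.
move=> cop H; have : D %| gcdn a D by rewrite dvdn_gcd dvdnn H.
by move: cop; rewrite /coprime => /eqP ->; rewrite dvdn1 => /eqP.
Qed.

Lemma glue_analysis (S : pred nat) g m D a :
  2 <= m -> m <= g.+1 -> S m -> ~~ (m %| g) -> (forall y, 0 < y < m -> ~~ S y) ->
  (forall x, S x = RR m g x) ->
  1 <= g -> 2 <= D -> S a -> coprime a D ->
  (forall x, S x -> exists l, [/\ l < D, l * a <= x, D %| x - l * a & S (x - l * a)]) ->
  (m = 2 \/ m = 3 \/ m = 4) /\ g %% m = 1.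
Proof.
move=> m2 mg Sm mng Hmin HR g1 D2 Sa cop HC.
have a0 : 0 < a.
  case: (posnP a) => // a0; move: cop; rewrite a0 /coprime gcd0n => /eqP; lia.
have am : m <= a.
  case: (ltnP a m) => // am; have := Hmin a; rewrite a0 am Sa => /(_ isT) //.
have Dn1 : D != 1 by lia.
have Hcase : a = m \/ (a <> m /\ D %| m).
  have [l [lD la Ddv Sy]] := HC m Sm.
  case: (posnP l) => [l0|l0]; first by right; move: Ddv; rewrite l0 mul0n subn0; split => // am'; have := cop_dvd cop; rewrite am' => /(_ Ddv); lia.
  left; have : a <= l * a by rewrite leq_pmull.
  lia.
have ag : a <> m -> g <= a.
  move=> anm; case: (ltnP a g) => // ag.
  have mda : m %| a by move: Sa; rewrite HR /RR ag.
  case: Hcase => [//|[_ Dm]].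
  have : D %| gcdn a D by rewrite dvdn_gcd dvdnn (dvdn_trans Dm mda).
  by move: cop; rewrite /coprime => /eqP ->; rewrite dvdn1; lia.
have Sgj : forall j, 0 < j < m -> S (g + j).
  move=> j /andP [j0 jm]; rewrite HR /RR.
  case: ltnP => H1; first lia.
  case: ltnP => H2 //; rewrite addnC addnK; apply/negP => /(dvdn_leq j0); lia.
have Key : forall j, 0 < j < m -> ~~ (D %| g + j) ->
    (a = m /\ m %| g + j) \/ (a <> m /\ a = g + j).
  move=> j jr nD.
  have [l [lD la Ddv Sy]] := HC _ (Sgj j jr).
  case: (posnP l) => [l0|l0]; first by move: Ddv nD; rewrite l0 mul0n subn0 => ->.
  case: (Hcase) => [am'|[anm Dm]].
    left; split => //.
    have yg : g + j - l * a < g.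
      have : a <= l * a by rewrite leq_pmull. lia.
    move: Sy; rewrite HR /RR yg => Hy.
    have -> : g + j = (g + j - l * a) + l * a by lia.
    by rewrite dvdn_add // am' dvdn_mull.
  right; split => //.
  have ga := ag anm.
  have y0 : g + j - l * a = 0.
    case: (posnP (g + j - l * a)) => // yp.
    have : a <= l * a by rewrite leq_pmull.
    move=> H; have := Hmin (g + j - l * a); rewrite yp Sy /=; move: jr; lia.
  case: (ltnP 1 l) => l1.
    have : 2 * a <= l * a by rewrite leq_mul2r l1 orbT.
    move: jr; lia.
  have l1' : l = 1 by lia.
  move: y0; rewrite l1'; lia.

have Uniq : forall j1 j2, 0 < j1 < m -> 0 < j2 < m -> ~~ (D %| g + j1) -> ~~ (D %| g + j2) -> j1 = j2.
  move=> j1 j2 r1 r2 n1 n2.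
  case: (Key j1 r1 n1) => [[am1 d1]|[an1 e1]]; case: (Key j2 r2 n2) => [[am2 d2]|[an2 e2]] //; try lia.
  apply: (@addnI g); apply: (dvd_close d1 d2); move: r1 r2; clear -am1; lia.
have NoTwo : forall j, 0 < j -> j.+1 < m -> ~~ (D %| g + j) \/ ~~ (D %| g + j.+1).
  move=> j j0 jm; case: (boolP (D %| g + j)) => H1; last by left.
  right; apply/negP => H2; apply: (negP Dn1); apply/eqP; apply: (dvd_succ H1).
  by rewrite addn1 -addnS.
have gm0 : g %% m != 0 by move: mng; rewrite /dvdn.
have mcase : m = 2 \/ m = 3 \/ m = 4.
  case: (ltnP m 5) => m5; first lia.
  exfalso.
  case: (NoTwo 1 isT ltac:(lia)) => H1; case: (NoTwo 3 isT ltac:(lia)) => H3;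
    have := Uniq _ _ _ _ H1 H3; move=> /(_ ltac:(lia) ltac:(lia)); lia.
split => //.
case: mcase => [m2'|[m3|m4]].
- by move: gm0; rewrite m2'; lia.
- have g3 : g %% 3 = 1 \/ g %% 3 = 2 by move: gm0; rewrite m3; lia.
  case: g3 => [g3|g3]; first by rewrite m3.
  exfalso.
  have S2g1 : S (2 * g + 1) by rewrite HR /RR; do 2 (case: ltnP => ?; try lia).
  have [l [lD la Ddv Sy]] := HC _ S2g1.
  case: Hcase => [am'|[anm Dm]].
  + subst a; rewrite m3 in Ddv Sy la cop.
    have E2 : D %| g + 2.
      apply/negPn/negP => n2; case: (Key 2 ltac:(lia) n2) => [[_ d]|[an _]]; last lia.
      move: d; rewrite m3; lia.
    case: (posnP l) => [l0|l0].
      move: Ddv; rewrite l0 mul0n subn0 => Ddv.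
      have D3 : D %| 3.
        have H4 : D %| 2 * (g + 2) by rewrite dvdn_mull.
        have E : 2 * (g + 2) = (2 * g + 1) + 3 by lia.
        by move: H4; rewrite E (dvdn_addr _ Ddv).
      by have := cop_dvd cop D3; lia.
    move: Sy; rewrite HR /RR m3; case: ltnP => H1; [|case: ltnP => H2];
      move: g3 la l0 H1; try move: H2; clear; lia.
  + have HD : D = 3.
      move: Dm; rewrite m3 => Dm; have : D <= 3 by apply: dvdn_leq.
      move=> HD; have : D = 2 \/ D = 3 by lia.
      by case=> HD'; [move: Dm; rewrite HD' | ].
    have E1 : D %| g + 1 by rewrite HD; lia.
    have E2 : ~~ (D %| g + 2).
      by case: (NoTwo 1 isT ltac:(lia)) => //; rewrite E1.
    have ae : a = g + 2.
      case: (Key 2 ltac:(lia) E2) => [[am' _]|[_ ->]] //; by case: anm.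
    have : l = 0 \/ l = 1 \/ l = 2 by lia.
    move=> Hl; move: Hl Ddv la; rewrite HD ae; clear -g3; case=> [->|[->|->]]; lia.
- have E2 : ~~ (D %| g + 2).
    apply/negP => H2.
    have E1 : ~~ (D %| g + 1) by case: (NoTwo 1 isT ltac:(lia)) => //; rewrite H2.
    have E3 : ~~ (D %| g + 3) by case: (NoTwo 2 isT ltac:(lia)) => //; rewrite H2.
    by have := Uniq 1 3 ltac:(lia) ltac:(lia) E1 E3.
  have E1 : D %| g + 1.
    by apply/negPn/negP => E1; have := Uniq 1 2 ltac:(lia) ltac:(lia) E1 E2.
  have E3 : D %| g + 3.
    by apply/negPn/negP => E3; have := Uniq 3 2 ltac:(lia) ltac:(lia) E3 E2.
  have HD : D = 2.
    have : D %| 2 by apply: (dvd_plus2 E1); rewrite -addnA.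
    by move/(dvdn_leq (isT : 0 < 2)); lia.
  have ae : a = g + 2.
    case: (Key 2 ltac:(lia) E2) => [[_ d]|[_ ->]] //.
    by move: d E1; rewrite m4 HD; clear; lia.
  have g4 : g %% 4 = 1 \/ g %% 4 = 3 by move: E1 gm0; rewrite HD m4; clear; lia.
  case: g4 => [g4|g4]; first by rewrite m4.
  exfalso.
  have S2g1 : S (2 * g + 1) by rewrite HR /RR; do 2 (case: ltnP => ?; try lia).
  have [l [lD la Ddv Sy]] := HC _ S2g1.
  have : l = 0 \/ l = 1 by lia.
  case=> Hl; move: Ddv Sy la; rewrite Hl HD ae ?mul0n ?mul1n HR /RR m4;
    case: ltnP => H1; try case: ltnP => H2; move: g4 H1; try move: H2; clear; lia.
Qed.


Lemma pgcd_prefix s i j : i <= j -> pgcd (take j s) %| pgcd (take i s).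
Proof.
move=> ij; apply: dvd_pgcd => x Hx; apply: pgcd_dvd.
by move: Hx; rewrite -(take_takel s ij); apply: mem_take.
Qed.

Lemma tele_glue (S : pred nat) s : numerical_semigroup S -> telescopic s ->
  (forall x, S x <-> genF s x) -> ~ S 1 ->
  exists D a, [/\ 2 <= D, S a, coprime a D &
    forall x, S x -> exists l, [/\ l < D, l * a <= x, D %| x - l * a & S (x - l * a)]].
Proof.
move=> [S0 [SD [N HN]]] Ht HS nS1.
have pg1 : pgcd s = 1.
  have H : forall y, S y -> pgcd s %| y.
    by move=> y /HS; apply: genF_dvd => x; apply: pgcd_dvd.
  apply: (dvd_succ (H N (HN N (leqnn N)))); apply: H; apply: HN; lia.
have exP : exists j, pgcd (take j s) == 1 by exists (size s); rewrite take_size pg1.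
case: (ex_minnP exP) => j0 /eqP Hj0 Hmin.
have j0s : j0 <= size s by apply: Hmin; rewrite take_size pg1.
have j0p : 0 < j0 by case: j0 Hj0 {Hmin j0s} => //; rewrite take0.
set j := j0.-1.
have jE : j0 = j.+1 by rewrite /j; lia.
have js : j < size s by lia.
set a := nth 0 s j.
set P := take j s.
have Hrc : take j0 s = rcons P a by rewrite jE (take_nth 0 js).
set D := pgcd P.
have Dn1 : D != 1.
  apply/negP => /eqP D1; have := Hmin j; rewrite -/P -/D D1 eqxx => /(_ isT); lia.
have gDa : gcdn D a = 1 by rewrite -pgcd_rcons -Hrc.
have Sa : S a by apply/HS; apply: genF_mem; rewrite /a mem_nth.
have D0 : D != 0.
  by apply/negP => /eqP D0; move: gDa; rewrite D0 gcd0n => a1; apply: nS1; rewrite -a1.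
have j0' : 0 < j.
  case: (posnP j) => // j00; move: D0; rewrite /D /P j00 take0 //.
have HDa : genF P (D * a).
  have := Ht j; rewrite -jE Hj0 divn1 => /(_ ltac:(lia)).
  by rewrite -/P -/D -/a => /gen_genF.
have Hall : forall k, j0 + k <= size s -> forall y, genF (take (j0 + k) s) y -> genF (take j0 s) y.
  elim=> [|k IH] Hk y; first by rewrite addn0.
  set i := j0 + k.
  have iss : i < size s by rewrite /i; lia.
  have pi1 : forall i', j0 <= i' -> pgcd (take i' s) = 1.
    by move=> i' Hi'; apply/eqP; rewrite -dvdn1 -Hj0; apply: pgcd_prefix.
  have Ti := Ht i; rewrite !pi1 ?divn1 ?mul1n in Ti; try (rewrite /i; lia).
  move: (Ti ltac:(rewrite /i; lia)) => /gen_genF Hb.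
  rewrite addnS (take_nth 0 iss) => /genF_rcons [k' [y' [-> Hy']]].
  apply: IH; first lia.
  by apply: genFD => //; apply: genFM.
exists D, a; split => //; first by lia.
  by rewrite /coprime gcdnC gDa.
move=> x /HS Hx; have := Hall (size s - j0) ltac:(lia) x; rewrite subnKC // take_size => /(_ Hx).
rewrite Hrc => /genF_rcons [k [y' [-> Hy']]].
have Dp : 0 < D by lia.
have E : y' + k * a - k %% D * a = y' + k %/ D * (D * a).
  by rewrite {1}(divn_eq k D) mulnDl addnA addnK mulnA [k %/ D * D]mulnC.
have PS : forall y, genF P y -> genF s y.
  by apply: genF_sub => z Hz; apply: genF_mem; apply: mem_take Hz.
exists (k %% D); split; first exact: ltn_pmod.
- by apply: leq_trans (leq_addl y' (k * a)) ; rewrite leq_mul2r leq_mod orbT.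
- rewrite E; apply: dvdn_add; first by apply: genF_dvd Hy' => z; apply: pgcd_dvd.
  by apply: dvdn_mull; apply: dvdn_mulr.
- by rewrite E; apply/HS; apply: PS; apply: genFD => //; apply: genFM.
Qed.


Lemma mul_cases l c : (l = 0 /\ l * c = 0) \/ (l = 1 /\ l * c = c) \/ (2 <= l /\ 2 * c <= l * c).
Proof.
case: l => [|[|l]]; [by left | by right; left; rewrite mul1n | right; right].
by split => //; rewrite leq_mul2r; apply/orP; right.
Qed.

Lemma genF2 a b x : genF [:: a; b] x <-> exists k l, x = k * a + l * b.
Proof.
split => /=.
  by case=> k [y [-> [l [z [-> ->]]]]]; exists k, l; rewrite addn0.
by case=> k [l ->]; exists k, (l * b); split => //; exists l, 0; rewrite addn0.
Qed.

Lemma genF3 a b c x : genF [:: a; b; c] x <-> exists k l p, x = k * a + l * b + p * c.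
Proof.
split => /=.
  case=> k [y [-> [l [z [-> [p [w [-> ->]]]]]]]]; exists k, l, p; lia.
case=> k [l [p ->]]; exists k, (l * b + p * c); split; first lia.
by exists l, (p * c); split => //; exists p, 0; rewrite addn0.
Qed.

Lemma fam2 q x : RR 2 (q * 2 + 1) x <-> genF [:: 2; 4 * q + 3] x.
Proof.
rewrite genF2 /RR; split.
  case: (boolP (2 %| x)) => H.
    by move=> _; exists (x %/ 2), 0; lia.
  case: ltnP => H1; first by [].
  case: ltnP => H2 H3; first by move: H H3; clear; lia.
  by exists ((x - (4 * q + 3)) %/ 2), 1; move: H H2; clear; lia.
case=> k [l ->]; have := mul_cases l (4 * q + 3).
move: (l * (4 * q + 3)) => L HL; case: ltnP => H1; [|case: ltnP => H2]; move: HL H1; try move: H2; clear; lia.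
Qed.

Lemma fam3 q x : RR 3 (q * 3 + 1) x <-> genF [:: 3; 3 * q + 2] x.
Proof.
rewrite genF2 /RR; split.
  have : x %% 3 = 0 \/ x %% 3 = 1 \/ x %% 3 = 2 by lia.
  case=> [H|[H|H]].
  - by move=> _; exists (x %/ 3), 0; lia.
  - case: ltnP => H1; first by move: H; clear; lia.
    case: ltnP => H2 H3; first by move: H H3 H1; clear; lia.
    by exists ((x - (6 * q + 4)) %/ 3), 2; move: H H2; clear; lia.
  - case: ltnP => H1; first by move: H; clear; lia.
    by move=> _; exists ((x - (3 * q + 2)) %/ 3), 1; move: H H1; clear; lia.
case=> k [l ->]; have := mul_cases l (3 * q + 2).
move: (l * (3 * q + 2)) => L HL; case: ltnP => H1; [|case: ltnP => H2]; move: HL H1; try move: H2; clear; lia.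
Qed.

Lemma fam4 q x : RR 4 (q * 4 + 1) x <-> genF [:: 4; 4 * q + 2; 4 * q + 3] x.
Proof.
rewrite genF3 /RR; split.
  have : x %% 4 = 0 \/ x %% 4 = 1 \/ x %% 4 = 2 \/ x %% 4 = 3 by lia.
  case=> [H|[H|[H|H]]].
  - by move=> _; exists (x %/ 4), 0, 0; lia.
  - case: ltnP => H1; first by move: H; clear; lia.
    case: ltnP => H2 H3; first by move: H H3 H1; clear; lia.
    by exists ((x - (8 * q + 5)) %/ 4), 1, 1; move: H H2; clear; lia.
  - case: ltnP => H1; first by move: H; clear; lia.
    by move=> _; exists ((x - (4 * q + 2)) %/ 4), 1, 0; move: H H1; clear; lia.
  - case: ltnP => H1; first by move: H; clear; lia.
    by move=> _; exists ((x - (4 * q + 3)) %/ 4), 0, 1; move: H H1; clear; lia.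
case=> k [l [p ->]]; have := mul_cases l (4 * q + 2); have := mul_cases p (4 * q + 3).
move: (l * (4 * q + 2)) (p * (4 * q + 3)) => L P HP HL.
case: ltnP => H1; [|case: ltnP => H2]; move: HL HP H1; try move: H2; clear; lia.
Qed.


Lemma tele2 a b : gen [:: a] (a %/ gcdn a b * b) -> telescopic [:: a; b].
Proof.
move=> H j; case: j => [|[|]] //= _.
by rewrite !gcdn0.
Qed.

Lemma min2 q : minimal_gens [:: 2; 4 * q + 3].
Proof.
split; first by rewrite /= inE andbT; apply/eqP; lia.
move=> x; rewrite !inE => /orP [/eqP ->|/eqP ->].
  rewrite /= ?eqxx => /gen_genF /= [k [y [E Y]]]; have := mul_cases k (4 * q + 3); lia.
rewrite /=; case: eqP => [?|_]; first lia.
rewrite ?eqxx => /gen_genF /= [k [y [E Y]]]; lia.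
Qed.

Lemma min3 q : minimal_gens [:: 3; 3 * q + 2].
Proof.
split; first by rewrite /= inE andbT; apply/eqP; lia.
move=> x; rewrite !inE => /orP [/eqP ->|/eqP ->].
  rewrite /= ?eqxx => /gen_genF /= [k [y [E Y]]]; have := mul_cases k (3 * q + 2); lia.
rewrite /=; case: eqP => [?|_]; first lia.
rewrite ?eqxx => /gen_genF /= [k [y [E Y]]]; lia.
Qed.

Lemma min4 q : 0 < q -> minimal_gens [:: 4; 4 * q + 2; 4 * q + 3].
Proof.
move=> q0; split; first by rewrite /= !inE !andbT; apply/andP; split; apply/eqP; lia.
move=> x; rewrite !inE => /orP [/eqP ->|/orP [/eqP ->|/eqP ->]].
- rewrite /= ?eqxx => /gen_genF /= [k [y [E [l [z [Ey Z]]]]]].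
  have := mul_cases k (4 * q + 2); have := mul_cases l (4 * q + 3); lia.
- rewrite /=; case: eqP => [?|_]; first lia.
  rewrite ?eqxx => /gen_genF /= [k [y [E [l [z [Ey Z]]]]]].
  have := mul_cases l (4 * q + 3); lia.
- rewrite /=; case: eqP => [?|_]; first lia.
  case: eqP => [?|_]; first lia.
  rewrite ?eqxx => /gen_genF /= [k [y [E [l [z [Ey Z]]]]]].
  have := mul_cases l (4 * q + 2); lia.
Qed.

Lemma tel2 q : telescopic_set [:: 2; 4 * q + 3].
Proof.
split; first by rewrite /= inE andbT; apply/eqP; lia.
exists [:: 2; 4 * q + 3]; split => //; apply: tele2.
have -> : 4 * q + 3 = (2 * q + 1) * 2 + 1 by lia.
rewrite gcdnMDl gcdn1 divn1; apply/gen_genF; exists ((2 * q + 1) * 2 + 1), 0; split => //; lia.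
Qed.

Lemma tel3 q : telescopic_set [:: 3; 3 * q + 2].
Proof.
split; first by rewrite /= inE andbT; apply/eqP; lia.
exists [:: 3; 3 * q + 2]; split => //; apply: tele2.
have -> : 3 * q + 2 = q * 3 + 2 by lia.
rewrite gcdnMDl (_ : gcdn 3 2 = 1) // divn1; apply/gen_genF; exists (q * 3 + 2), 0; split => //; lia.
Qed.

Lemma tel4 q : telescopic_set [:: 4; 4 * q + 2; 4 * q + 3].
Proof.
split; first by rewrite /= !inE !andbT; apply/andP; split; apply/eqP; lia.
exists [:: 4; 4 * q + 2; 4 * q + 3]; split => //.
have g1 : gcdn 4 (4 * q + 2) = 2.
  have -> : 4 * q + 2 = q * 4 + 2 by lia.
  by rewrite gcdnMDl.
have g2 : gcdn (4 * q + 2) (4 * q + 3) = 1.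
  have -> : 4 * q + 3 = (4 * q + 2) + 1 by lia.
  by rewrite gcdnDl gcdn1.
move=> j; case: j => [|[|[|]]] //= _.
  rewrite !gcdn0 g1; apply/gen_genF; exists (2 * q + 1), 0; split => //=; rewrite (_ : 4 %/ 2 = 2) //; lia.
rewrite !gcdn0 g2 gcdn1 g1 divn1; apply/gen_genF.
exists (q + 1), (4 * q + 2); split; first lia.
by exists 1, 0; split => //; lia.
Qed.

Unset Implicit Arguments.

Theorem mainTheorem13 (S : pred nat) :
  numerical_semigroup S -> free_sg S -> reflective S ->
  exists A : seq nat,
    telescopic_set A /\ minimal_gens A /\ generated_by S A /\
    [\/ perm_eq A [:: 1] /\ has_genus S 0,
        exists n, perm_eq A [:: 2; 4 * n + 3] /\ has_genus S (2 * n + 1),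
        exists n, perm_eq A [:: 3; 3 * n + 2] /\ has_genus S (3 * n + 1)
      | exists n, perm_eq A [:: 4; 4 * n + 2; 4 * n + 3] /\ has_genus S (4 * n + 1)].
Proof.
move=> HS [A0 [[_ [s [Ps Ts]]] GA0]] [g [Hg [g0|[g1 Hx]]]].
- subst g; exists [:: 1]; split.
    by split => //; exists [:: 1]; split => //; case=> [|[|]].
  split.
    split => // x; rewrite inE => /eqP -> /gen_genF /=; lia.
  have SN : forall x, S x.
    case: Hg => N [HN Hc] x; case: (leqP N x) => Hx; first exact: HN.
    apply/negPn/negP => Hn.
    have : 0 < count (fun x => ~~ S x) (iota 0 N).
      by rewrite -has_count; apply/hasP; exists x => //; rewrite mem_iota.
    by rewrite Hc.
  split; last by apply: Or41.
  move=> x; split => _; last exact: SN.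
  by apply/gen_genF; exists x, 0; split => //; lia.
- have [m [m2 mg Sm mng [Hmin HR]]] := refl_struct HS Hg g1 Hx.
  have HSs : forall x, S x <-> genF s x.
    by move=> x; rewrite GA0 gen_genF (genF_perm Ps).
  have nS1 : ~ S 1 by move=> S1; have := Hmin 1; rewrite m2 S1 => /(_ isT).
  have [D [a [D2 Sa cop HC]]] := tele_glue HS Ts HSs nS1.
  have [mc gm] := glue_analysis m2 mg Sm mng Hmin HR g1 D2 Sa cop HC.
  have gE : g = g %/ m * m + 1 by rewrite {1}(divn_eq g m) gm.
  set q := g %/ m in gE.
  case: mc => [m2'|[m3|m4]]; rewrite ?m2' ?m3 ?m4 in gE HR mg.
  + exists [:: 2; 4 * q + 3]; split; first exact: tel2.
    split; first exact: min2.
    split; first by move=> x; rewrite HR gE fam2 gen_genF.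
    by apply: Or42; exists q; split => //; rewrite -(_ : g = 2 * q + 1) //; lia.
  + exists [:: 3; 3 * q + 2]; split; first exact: tel3.
    split; first exact: min3.
    split; first by move=> x; rewrite HR gE fam3 gen_genF.
    by apply: Or43; exists q; split => //; rewrite -(_ : g = 3 * q + 1) //; lia.
  + exists [:: 4; 4 * q + 2; 4 * q + 3]; split; first exact: tel4.
    split; first by apply: min4; lia.
    split; first by move=> x; rewrite HR gE fam4 gen_genF.
    by apply: Or44; exists q; split => //; rewrite -(_ : g = 4 * q + 1) //; lia.
Qed.
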